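(* Let $k\ge 2$ and let $P=(p_1,\dots,p_k)$ and $Q=(q_1,\dots,q_k)$ be two multinomial (categorical) probability distributions over the same index set $\{1,\dots,k\}$. Suppose the indices of the largest probabilities of $P$ and $Q$ do not match, i.e. $\arg\max_i p_i \neq \arg\max_j q_j$. Then $$d_{H^2}(Q,P)\;\ge\; 1-\sqrt{\frac{2-\bigl(\sqrt{p_{(1)}}-\sqrt{p_{(2)}}\bigr)^2}{2}},$$ where $p_{(1)}$ and $p_{(2)}$ denote the first and second largest probabilities among $p_1,\dots,p_k$.
   Context: The squared Hellinger distance is $d_{H^2}(Q,P)=1-\sum_{i=1}^k\sqrt{p_iq_i}=\frac12\sum_{i=1}^k(\sqrt{p_i}-\sqrt{q_i})^2$. *)

(* Defs.v *)
From HB Require Import structures.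
From mathcomp Require Import all_boot all_order all_algebra.
From mathcomp Require Import reals.
Set Implicit Arguments. Unset Strict Implicit. Unset Printing Implicit Defensive.
Import Order.TTheory GRing.Theory Num.Theory.
Local Open Scope ring_scope.

Definition is_distr (R : realType) (k : nat) (p : 'I_k -> R) : Prop :=
  (forall i, 0 <= p i) /\ \sum_(i < k) p i = 1.

Definition hellinger2 (R : realType) (k : nat) (q p : 'I_k -> R) : R :=
  1 - \sum_(i < k) Num.sqrt (p i * q i).

Definition sorted_probs (R : realType) (k : nat) (p : 'I_k -> R) : seq R :=
  sort (fun x y : R => y <= x) [seq p i | i <- enum 'I_k].

Definition p_first (R : realType) (k : nat) (p : 'I_k -> R) : R :=
  nth 0 (sorted_probs p) 0.
Definition p_second (R : realType) (k : nat) (p : 'I_k -> R) : R :=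
  nth 0 (sorted_probs p) 1.

(* Main.v *)
Require Import Defs.
From HB Require Import structures.
From mathcomp Require Import all_boot all_order all_algebra.
From mathcomp Require Import reals.
From mathcomp Require Import lra.
Import Order.TTheory GRing.Theory Num.Theory.
Local Open Scope ring_scope.

Lemma sorted_facts (R : realType) (k : nat) (p : 'I_k -> R) (i j : 'I_k) :
  (forall l, p l <= p i) -> i != j ->
  [/\ p_first p = p i, p j <= p_second p & p_second p <= p_first p].
Proof.
move=> Hi Hij.
set s := sorted_probs p.
have Hperm : perm_eq s [seq p l | l <- enum 'I_k] by rewrite /s /sorted_probs perm_sort.
have Hsort : sorted (fun x y : R => y <= x) s.
  apply: sort_sorted => x y; exact: le_total.
have Htr : transitive (fun x y : R => y <= x).
  by move=> x y z /= h1 h2; exact: le_trans h2 h1.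
have Hcnt : (2 <= count (fun x : R => (p j <= x)%R) s)%N.
  rewrite (permP Hperm) count_map.
  have iin : i \in enum 'I_k by rewrite mem_enum.
  have jin : j \in rem i (enum 'I_k) by rewrite mem_rem_uniq ?enum_uniq // inE eq_sym Hij mem_enum.
  rewrite (permP (perm_to_rem iin)) /= (permP (perm_to_rem jin)) /= Hi lexx.
  by rewrite !add1n ltnS.
move: Hsort Hcnt; rewrite /p_first /p_second -/s.
case: s Hperm => [|a [|b rest]] Hperm //=.
  by rewrite addn0; case: (p j <= a).
move=> /andP [ba]; rewrite (path_sortedE Htr) => /andP [/allP Hrest _] Hcnt.
have ai : a <= p i.
  have : a \in [seq p l | l <- enum 'I_k] by rewrite -(perm_mem Hperm) inE eqxx.
  by case/mapP => l _ ->.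
have pia : p i <= a.
  have : p i \in a :: b :: rest by rewrite (perm_mem Hperm); apply: map_f; rewrite mem_enum.
  rewrite !inE => /orP [/eqP -> //| /orP [/eqP -> // | /Hrest /= h]].
  exact: le_trans h ba.
split => //; first by apply/eqP; rewrite eq_le ai pia.
rewrite leNgt; apply/negP => hb.
have : count (fun x : R => (p j <= x)%R) rest = 0%N.
  apply/eqP; rewrite -leqn0 leqNgt -has_count; apply/negP => /hasP [x /Hrest /= xb pjx].
  by move: (le_lt_trans (le_trans pjx xb) hb); rewrite ltxx.
have hf : (p j <= b) = false by rewrite leNgt hb.
move=> h; move: Hcnt; rewrite hf h; by case: (p j <= a).
Qed.

Theorem mainTheorem2 (R : realType) (k : nat) (p q : 'I_k -> R)
  (i j : 'I_k) :
  (2 <= k)%N ->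
  is_distr p -> is_distr q ->
  (forall l, p l <= p i) ->  (* i is an argmax of P *)
  (forall l, q l <= q j) ->  (* j is an argmax of Q *)
  i != j ->
  hellinger2 q p >=
    1 - Num.sqrt ((2 - (Num.sqrt (p_first p) - Num.sqrt (p_second p)) ^+ 2) / 2).
Proof.
move=> _ [p0 p1] [q0 q1] Hi Hj Hij.
have [Hf Hs Hsf] := @sorted_facts R k p i j Hi Hij.
set x := fun l => Num.sqrt (p l).
set y := fun l => Num.sqrt (q l).
have x2 : forall l, x l ^+ 2 = p l by move=> l; rewrite sqr_sqrtr.
have y2 : forall l, y l ^+ 2 = q l by move=> l; rewrite sqr_sqrtr.
have x0 : forall l, 0 <= x l by move=> l; exact: sqrtr_ge0.
have y0 : forall l, 0 <= y l by move=> l; exact: sqrtr_ge0.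
have pi1 : p i <= 1.
  rewrite -p1 (bigD1 i) //= lerDl; apply: sumr_ge0 => l _; exact: p0.
have xi1 : x i <= 1 by rewrite /x -(sqrtr1 R); exact: ler_wsqrtr.
have xji : x j <= x i by exact: ler_wsqrtr.
have yij : y i <= y j by exact: ler_wsqrtr.
set d := x i - x j.
have d0 : 0 <= d by rewrite subr_ge0.
have d1 : d <= 1 by rewrite /d; have := x0 j; lra.
have hpos : 0 <= 1 - d ^+ 2 / 2 by nra.
set s := Num.sqrt (1 - d ^+ 2 / 2).
have s2 : s ^+ 2 = 1 - d ^+ 2 / 2 by rewrite sqr_sqrtr.
have s0 : 0 <= s by exact: sqrtr_ge0.
have spos : 0 < s by nra.
set F := fun l => 2 * s * (x l * y l) - p l - s ^+ 2 * q l.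
have HF : \sum_(l < k) F l <= - d ^+ 2 / 2.
  rewrite (bigD1 i) //= (bigD1 j) //=; last by rewrite eq_sym.
  have rest : \sum_(l < k | (l != i) && (l != j)) F l <= 0.
    apply: sumr_le0 => l _; rewrite /F -x2 -y2.
    have := sqr_ge0 (x l - s * y l); nra.
  have Fij : F i + F j <= - d ^+ 2 / 2.
    rewrite /F -!x2 -!y2 /d.
    have h1 : 0 <= (x i - x j) * (y j - y i) by apply: mulr_ge0; rewrite subr_ge0.
    have h2 := sqr_ge0 ((x i + x j) / 2 - s * y i).
    have h3 := sqr_ge0 ((x i + x j) / 2 - s * y j).
    have h4 : 0 <= s * ((x i - x j) * (y j - y i)) by apply: mulr_ge0.
    nra.
  lra.
have BCe : \sum_(l < k) Num.sqrt (p l * q l) = \sum_(l < k) x l * y l.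
  by apply: eq_bigr => l _; rewrite sqrtrM.
have HFe : \sum_(l < k) F l = 2 * s * (\sum_(l < k) x l * y l) - 1 - s ^+ 2.
  by rewrite /F !sumrB -!mulr_sumr p1 q1 mulr1.
have BCs : \sum_(l < k) x l * y l <= s.
  have h : s * (\sum_(l < k) x l * y l) <= s * s.
    rewrite HFe in HF; move: HF s2; rewrite expr2; lra.
  by rewrite ler_pM2l in h.
have sS : s <= Num.sqrt ((2 - (Num.sqrt (p_first p) - Num.sqrt (p_second p)) ^+ 2) / 2).
  apply: ler_wsqrtr.
  have a1 : Num.sqrt (p j) <= Num.sqrt (p_second p) by exact: ler_wsqrtr.
  have a2 : Num.sqrt (p_second p) <= Num.sqrt (p_first p) by exact: ler_wsqrtr.
  move: a1 a2; rewrite Hf -/(x i) -/(x j) /d => a1 a2.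
  nra.
rewrite /hellinger2 BCe.
lra.
Qed.
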